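(* Assume the rearrangement setting described in the context, and assume additionally that: - $X$ is convex in $R$; and - there is no walk in $R$ that starts in $M$ and ends in $Y$, and no walk in $R$ that starts in $Y$ and ends in $M$. Let $z_0,\dots,z_I$ be a walk in $S$, and let $K=\{i\in\{1,\dots,I\}: z_{i-1}z_i\notin A_r\}$. Then $\#K\le 2$. Moreover, if $K=\{k,\ell\}$ with $k<\ell$, then there exist $m,n\in M$ and $x,y\in X$ such that: - $mx$ and $yn$ are proper arcs of $R$; - $z_{k-1}z_k=m\beta(x)\in A_d$; - $z_{\ell-1}z_\ell=\beta(y)n\in A_u$.
   Context: **Digraphs.** - A digraph $G$ is a pair $(V(G),A(G))$, where $V(G)$ is a finite non-empty set and $A(G)\subseteq V(G)\times V(G)$. Arcs are written $vw$. - An arc $vw$ with $v\ne w$ is proper. - Two vertices $u,w$ are adjacent if $uw\in A(G)$ or $wu\in A(G)$. $N_G(v)$ is the set of $w\ne v$ adjacent to $v$. - A walk is a sequence $v_0,\dots,v_I$ with $I\ge1$ and $v_{i-1}v_i\in A(G)$ for all $i$. - A set $X\subseteq V(G)$ is convex if every walk starting and ending in $X$ has all its vertices in $X$. **Rearrangement setting.** - $R=(Z,A(R))$ is a digraph. - $X,M\subseteq Z$ are disjoint. - $Y\subseteq Z$ satisfies $M\cap Y=\emptyset$ and $M\cap N_R(y)=\emptyset$ for all $y\in Y$. - $\beta:X\to Y$ is a map. - $S$ is the digraph with $V(S)=Z$ and $A(S)=A_r\cup A_d\cup A_u$, where: - $A_r=A(R)\setminus((M\times X)\cup(X\times M))$;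 - $A_d=\{m\beta(x): mx\in A(R)\cap(M\times X)\}$; - $A_u=\{\beta(x)m: xm\in A(R)\cap(X\times M)\}$. *)

(* Defs.v *)
From mathcomp Require Import all_boot.
Set Implicit Arguments. Unset Strict Implicit. Unset Printing Implicit Defensive.

Definition adjacent (Z : finType) (G : rel Z) (u w : Z) : bool := G u w || G w u.

Definition nbhd (Z : finType) (G : rel Z) (v : Z) : {set Z} :=
  [set w | (w != v) && adjacent G v w].

Definition walk (Z : finType) (G : rel Z) (z : nat -> Z) (I : nat) : Prop :=
  1 <= I /\ forall i, 1 <= i <= I -> G (z i.-1) (z i).

Definition convex (Z : finType) (G : rel Z) (X : {set Z}) : Prop :=
  forall (z : nat -> Z) (I : nat), walk G z I -> z 0 \in X -> z I \in X ->
    forall i, i <= I -> z i \in X.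

Definition A_r (Z : finType) (R : rel Z) (X M : {set Z}) : rel Z :=
  fun u v => R u v && ~~ ((u \in M) && (v \in X)) && ~~ ((u \in X) && (v \in M)).

Definition A_d (Z : finType) (R : rel Z) (X M : {set Z}) (beta : Z -> Z) : rel Z :=
  fun u v => [exists x, [&& x \in X, u \in M, R u x & v == beta x]].

Definition A_u (Z : finType) (R : rel Z) (X M : {set Z}) (beta : Z -> Z) : rel Z :=
  fun u v => [exists x, [&& x \in X, v \in M, R x v & u == beta x]].

Definition S_arc (Z : finType) (R : rel Z) (X M : {set Z}) (beta : Z -> Z) : rel Z :=
  fun u v => [|| A_r R X M u v, A_d R X M beta u v | A_u R X M beta u v].

(* Main.v *)
Require Import Defs.
From mathcomp Require Import all_boot.
From mathcomp Require Import zify.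

Lemma nar_type (Z : finType) (R : rel Z) (X M : {set Z}) (beta : Z -> Z) u v :
  S_arc R X M beta u v -> ~~ A_r R X M u v ->
  (u \in M /\ exists x, [/\ x \in X, R u x & v = beta x]) \/
  (v \in M /\ exists x, [/\ x \in X, R x v & u = beta x]).
Proof.
rewrite /S_arc => /or3P [->//|/existsP [x /and4P [hx hu hR /eqP ->]]|
  /existsP [x /and4P [hx hv hR /eqP ->]]] _.
- by left; split=> //; exists x.
- by right; split=> //; exists x.
Qed.

Lemma seg_walk (Z : finType) (R : rel Z) (z : nat -> Z) i j :
  i < j.-1 -> (forall p, i < p < j -> R (z p.-1) (z p)) ->
  walk R (fun t => z (i + t)) (j.-1 - i) /\ z (i + (j.-1 - i)) = z j.-1.
Proof.
move=> hij hR; split; last by congr z; lia.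
split; first lia.
move=> t ht; have -> : i + t.-1 = (i + t).-1 by lia.
apply: hR; lia.
Qed.

Definition cw {Z : Type} (z : nat -> Z) x x' i j t :=
  if t == 0 then x else if t < j - i + 1 then z (i + t.-1) else x'.

Lemma conv_walk (Z : finType) (R : rel Z) (z : nat -> Z) x x' i j :
  i < j -> R x (z i) -> R (z j.-1) x' -> (forall p, i < p < j -> R (z p.-1) (z p)) ->
  walk R (cw z x x' i j) (j - i + 1).
Proof.
move=> hij hx hx' hR; split; first lia.
move=> t ht; rewrite /cw.
case: (eqVneq t 1) => [->|ht1].
  by rewrite /= addn0; have -> : 1 < j - i + 1 by lia.
have -> : (t == 0) = false by lia.
have -> : (t.-1 == 0) = false by lia.
have -> : t.-1 < j - i + 1 by lia.
case: (ltnP t (j - i + 1)) => htJ.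
  have -> : i + t.-2 = (i + t.-1).-1 by lia.
  apply: hR; lia.
have -> : i + t.-2 = j.-1 by lia.
exact: hx'.
Qed.

Theorem lemma6 (Z : finType) (R : rel Z) (X M Y : {set Z}) (beta : Z -> Z)
  (hXM : [disjoint X & M])
  (hMY : [disjoint M & Y])
  (hMN : forall y, y \in Y -> [disjoint M & nbhd R y])
  (hbeta : forall x, x \in X -> beta x \in Y)
  (hconv : convex R X)
  (hnoMY : forall (w : nat -> Z) (J : nat), walk R w J -> w 0 \in M -> w J \in Y -> False)
  (hnoYM : forall (w : nat -> Z) (J : nat), walk R w J -> w 0 \in Y -> w J \in M -> False)
  (z : nat -> Z) (I : nat) (hwalk : walk (S_arc R X M beta) z I) :
  let K := [set i : 'I_I.+1 | (0 < val i) && ~~ A_r R X M (z (val i).-1) (z (val i))] in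
  #|K| <= 2 /\
  (forall k l : 'I_I.+1, val k < val l -> K = [set k; l] ->
     exists m n x y : Z,
       [/\ m \in M, n \in M, x \in X & y \in X] /\
       [/\ R m x, m != x, R y n & y != n] /\
       [/\ z (val k).-1 = m, z (val k) = beta x & A_d R X M beta (z (val k).-1) (z (val k))] /\
       [/\ z (val l).-1 = beta y, z (val l) = n & A_u R X M beta (z (val l).-1) (z (val l))]).
Proof.
move=> K.
case: hwalk => hI hS.
pose nar p := (0 < p <= I) && ~~ A_r R X M (z p.-1) (z p).
have MY : forall a, a \in M -> a \in Y -> False.
  by move=> a ha hb; move: (disjointFr hMY ha); rewrite hb.
have XM : forall a, a \in X -> a \in M -> False.
  by move=> a ha hb; move: (disjointFr hXM ha); rewrite hb.
have typ : forall p, nar p ->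
  (z p.-1 \in M /\ exists x, [/\ x \in X, R (z p.-1) x & z p = beta x]) \/
  (z p \in M /\ exists x, [/\ x \in X, R x (z p) & z p.-1 = beta x]).
  move=> p /andP [hp hn]; exact: nar_type (hS p hp) hn.
have key : forall n i j, j - i <= n -> nar i -> nar j -> i < j ->
    z i.-1 \in M /\ z j.-1 \in Y.
  elim=> [|n IH] i j hn hi hj hij; first lia.
  case: (boolP (has nar (iota i.+1 (j - i.+1)))).
    case/hasP=> p; rewrite mem_iota => hp hnp.
    have [_ h1] := IH i p ltac:(lia) hi hnp ltac:(lia).
    have [h2 _] := IH p j ltac:(lia) hnp hj ltac:(lia).
    by case: (MY _ h2 h1).
  move/hasPn=> hno.
  have hR : forall p, i < p < j -> R (z p.-1) (z p).
    move=> p hp.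
    have hpI : 0 < p <= I by move: hi hj => /andP [hi _] /andP [hj _]; lia.
    have := hno p; rewrite mem_iota /nar hpI /= negbK => /(_ ltac:(lia)).
    by case/andP=> /andP [].
  have hjI : j <= I by case/andP: hj => /andP [].
  case: (typ i hi) => [[hiM [x [hx hRx hzi]]]|[hiM [x [hx hRx hzi]]]];
  case: (typ j hj) => [[hjM [x' [hx' hRx' hzj]]]|[hjM [x' [hx' hRx' hzj]]]].
  -
    exfalso.
    have hzY : z i \in Y by rewrite hzi hbeta.
    case: (ltnP i j.-1) => hlt.
      have [hw he] := @seg_walk _ R z i j hlt hR.
      by move: (hnoYM _ _ hw); rewrite /= addn0 he; apply.
    have e : j.-1 = i by lia. rewrite e in hjM.
    exact: MY hjM hzY.
  - split=> //; by rewrite hzj hbeta.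
  - (* u d: convexity *)
    exfalso.
    have := hconv _ _ (@conv_walk _ R z x x' i j hij hRx hRx' hR) hx.
    have e1 : (j - i + 1 == 0) = false by clear -hij; lia.
    have e2 : 1 < j - i + 1 by clear -hij; lia.
    rewrite /cw e1 ltnn => /(_ hx' 1 (ltnW e2)).
    rewrite e2 /= addn0 => h.
    exact: XM h hiM.
  -
    exfalso.
    have hzY : z j.-1 \in Y by rewrite hzj hbeta.
    case: (ltnP i j.-1) => hlt.
      have [hw he] := @seg_walk _ R z i j hlt hR.
      by move: (hnoMY _ _ hw); rewrite /= addn0 he; apply.
    have e : j.-1 = i by lia. rewrite e in hzY.
    exact: MY hiM hzY.
  have key2 : forall i j, nar i -> nar j -> i < j -> z i.-1 \in M /\ z j.-1 \in Y.
    by move=> i j; apply: (key (j - i)).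
  have inK : forall i : 'I_I.+1, (i \in K) = nar i.
    move=> i; rewrite inE /nar; have := ltn_ord i; rewrite ltnS => ->.
    by rewrite andbT.
  split.
  - pose Kd := [set i in K | z (val i).-1 \in M].
    have inKd : forall i, (i \in Kd) = (i \in K) && (z (val i).-1 \in M).
      by move=> i; rewrite inE.
    have sub : K \subset Kd :|: (K :\: Kd).
      by apply/subsetP=> i hi; rewrite in_setU in_setD hi andbT orbN.
    apply: (leq_trans (subset_leq_card sub)); apply: (leq_trans (leq_card_setU _ _)).
    have c1 : #|Kd| <= 1.
      apply/card_le1_eqP=> a b; rewrite !inKd => /andP [ha hma] /andP [hb hmb].
      rewrite inK in ha; rewrite inK in hb.
      case: (ltngtP (val a) (val b)) => hab; last by apply: val_inj.
        by have [_ h] := key2 _ _ ha hb hab; case: (MY _ hmb h).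
      by have [_ h] := key2 _ _ hb ha hab; case: (MY _ hma h).
    have c2 : #|K :\: Kd| <= 1.
      apply/card_le1_eqP=> a b; rewrite !in_setD !inKd.
      move=> /andP [hna ha] /andP [hnb hb].
      rewrite ha /= in hna; rewrite hb /= in hnb.
      rewrite inK in ha; rewrite inK in hb.
      case: (ltngtP (val a) (val b)) => hab; last by apply: val_inj.
        by have [h _] := key2 _ _ ha hb hab; rewrite h in hna.
      by have [h _] := key2 _ _ hb ha hab; rewrite h in hnb.
    clear -c1 c2; lia.
  - move=> k l hkl hK.
    have hk : nar k by rewrite -inK hK !inE eqxx.
    have hl : nar l by rewrite -inK hK !inE eqxx orbT.
    have [hkM hlY] := key2 _ _ hk hl hkl.
    case: (typ _ hk) => [[_ [x [hx hRx hzk]]]|[_ [x0 [hx0 _ hz0]]]]; last by case: (MY _ hkM); rewrite hz0 hbeta.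
    case: (typ _ hl) => [[hlM _]|[hn [y [hy hRy hzl]]]].
      by case: (MY _ hlM hlY).
    exists (z (val k).-1), (z (val l)), x, y.
    split; first by [].
    split.
    + split=> //; apply/eqP=> e; [apply: (XM x) | apply: (XM y)]; rewrite // -?e //.
      by rewrite e.
    + split; split=> //; apply/existsP.
      * by exists x; rewrite hx hkM hRx hzk eqxx.
      * by exists y; rewrite hy hn hRy hzl eqxx.
Qed.
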